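(* Let $\mathcal{H}$ be a complex separable Hilbert space and $\mathcal{E}(\mathcal{H})$ its set of effects. For $A\in\mathcal{E}(\mathcal{H})$, with $A'=I-A$, put $$X(A):=2\|A\|\,\|A'\|-\bigl(\|A\|+\|A'\|-1\bigr),$$ $$Y(A):=2\bigl(\|A\|\,\|A'\|-\|AA'\|\bigr)-\Bigl[\bigl(\|A\|+\|A'\|-1\bigr)-\bigl(\|AA'\|+\|I-AA'\|-1\bigr)\Bigr],$$ and $$\mathcal{S}_2(A):=X(A)-\sqrt{X(A)^2-Y(A)}.$$ Then $\mathcal{S}_2$ is a well-defined real-valued function on $\mathcal{E}(\mathcal{H})$ and is a sharpness measure.
   Context: An effect is a selfadjoint bounded operator $A$ on $\mathcal{H}$ with $\mathbb{O}\le A\le I$. An effect is trivial if $A=\lambda I$, $\lambda\in[0,1]$; a nontrivial projection is a projection other than $\mathbb{O},I$. Norms are operator norms. A function $\mathcal{S}:\mathcal{E}(\mathcal{H})\to\mathbb{R}$ is a sharpness measure if: (S1) $0\le\mathcal{S}(A)\le1$; (S2) $\mathcal{S}(A)=0$ iff $A$ is trivial; (S3) $\mathcal{S}(A)=1$ iff $A$ is a nontrivial projection; (S4) $\mathcal{S}(A')=\mathcal{S}(A)$; (S5) $\mathcal{S}(CAC^{-1})=\mathcal{S}(A)$ for every invertible bounded $C$ such that $CAC^{-1}$ is an effect; (S6) $A\mapsto\mathcal{S}(A)$ is operator-norm continuous. *)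

(* Defs.v *)
From HB Require Import structures.
From mathcomp Require Import all_boot all_order all_algebra.
From mathcomp Require Import complex.
From mathcomp Require Import reals classical_sets.
Set Implicit Arguments. Unset Strict Implicit. Unset Printing Implicit Defensive.
Import Order.TTheory GRing.Theory Num.Theory.
Local Open Scope ring_scope.
Local Open Scope classical_set_scope.

Section Hilbert.
Variables (R : realType) (H : lmodType R[i]) (ip : H -> H -> R[i]).

Definition hnorm (x : H) : R := Num.sqrt (complex.Re (ip x x)).

Definition inner_product : Prop :=
  [/\ (forall a x y z, ip (a *: x + y) z = a * ip x z + ip y z),
      (forall x y, ip y x = Num.conj (ip x y)),
      (forall x, 0 <= ip x x) &
      (forall x, ip x x = 0 -> x = 0)].

Definition complete : Prop :=
  forall u : nat -> H,
    (forall e : R, 0 < e -> exists N : nat, forall m n : nat,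
        (N <= m)%N -> (N <= n)%N -> hnorm (u m - u n) < e) ->
    exists l : H, forall e : R, 0 < e -> exists N : nat, forall n : nat,
        (N <= n)%N -> hnorm (u n - l) < e.

Definition separable : Prop :=
  exists d : nat -> H, forall (x : H) (e : R), 0 < e -> exists n : nat, hnorm (x - d n) < e.

Definition separable_hilbert : Prop := [/\ inner_product, complete & separable].

Definition is_linear_op (T : H -> H) : Prop :=
  forall (a : R[i]) (x y : H), T (a *: x + y) = a *: T x + T y.

Definition bounded_op (T : H -> H) : Prop :=
  is_linear_op T /\ exists M : R, forall x, hnorm (T x) <= M * hnorm x.

Definition opnorm (T : H -> H) : R :=
  sup [set hnorm (T x) | x in [set x : H | hnorm x <= 1]].

Definition selfadjoint (A : H -> H) : Prop :=
  forall x y, ip (A x) y = ip x (A y).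

Definition effect (A : H -> H) : Prop :=
  [/\ bounded_op A, selfadjoint A & forall x, 0 <= ip (A x) x <= ip x x].

Definition idop : H -> H := fun x => x.
Definition zeroop : H -> H := fun _ => 0.
Definition compl (A : H -> H) : H -> H := fun x => x - A x.
Definition opmul (A B : H -> H) : H -> H := fun x => A (B x).
Definition opsub (A B : H -> H) : H -> H := fun x => A x - B x.

Definition trivial_effect (A : H -> H) : Prop :=
  exists l : R, 0 <= l <= 1 /\ forall x, A x = (l%:C)%C *: x.

Definition nontrivial_projection (A : H -> H) : Prop :=
  (forall x, A (A x) = A x) /\ (exists x, A x <> 0) /\ (exists x, A x <> x).

Definition invertible_bounded (C : H -> H) (D : H -> H) : Prop :=
  [/\ bounded_op C, bounded_op D, (forall x, C (D x) = x) & (forall x, D (C x) = x)].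

Definition sharpness_measure (S : (H -> H) -> R) : Prop :=
  [/\ (forall A, effect A -> 0 <= S A <= 1),
      (forall A, effect A -> (S A = 0 <-> trivial_effect A)),
      (forall A, effect A -> (S A = 1 <-> nontrivial_projection A)),
      (forall A, effect A -> S (compl A) = S A) &
      ((forall A C D, effect A -> invertible_bounded C D ->
          effect (opmul C (opmul A D)) -> S (opmul C (opmul A D)) = S A) /\
      (forall A, effect A -> forall e : R, 0 < e -> exists2 d : R, 0 < d &
          forall B, effect B -> opnorm (opsub B A) < d -> `|S B - S A| < e))].

Definition Xq (A : H -> H) : R :=
  2 * opnorm A * opnorm (compl A) - (opnorm A + opnorm (compl A) - 1).

Definition Yq (A : H -> H) : R :=
  2 * (opnorm A * opnorm (compl A) - opnorm (opmul A (compl A)))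
  - ((opnorm A + opnorm (compl A) - 1)
     - (opnorm (opmul A (compl A)) + opnorm (compl (opmul A (compl A))) - 1)).

Definition S2 (A : H -> H) : R := Xq A - Num.sqrt (Xq A ^+ 2 - Yq A).

End Hilbert.

(* Main.v *)
Require Import Defs.
From HB Require Import structures.
From mathcomp Require Import all_boot all_order all_algebra.
From mathcomp Require Import complex.
From mathcomp Require Import reals classical_sets.
From mathcomp Require Import ring lra.
From Stdlib Require Import Classical FunctionalExtensionality.
Import Order.TTheory GRing.Theory Num.Theory.
Local Open Scope ring_scope.
Local Open Scope classical_set_scope.
Set Implicit Arguments. Unset Strict Implicit. Unset Printing Implicit Defensive.

Section Sc.
Variable R : realType.
Implicit Types m M lb lw b c : R.

Lemma sqrt_le' (a x : R) : 0 <= x -> (Num.sqrt a <= x) = (a <= x ^+ 2).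
Proof.
move=> hu; have [ha|ha] := leP 0 a.
  by rewrite -{1}(ger0_norm hu) -sqrtr_sqr ler_sqrt ?sqr_ge0.
rewrite ltr0_sqrtr // hu; apply/esym; apply: le_trans (ltW ha) _; exact: sqr_ge0.
Qed.

Lemma conc m M l : m <= l <= M -> (m - m ^+ 2 <= l - l ^+ 2) \/ (M - M ^+ 2 <= l - l ^+ 2).
Proof.
move=> /andP[h1 h2]; have [h|h] := leP (l + m) 1.
  by left; nra.
by right; nra.
Qed.

Lemma core_i m M lw b c : 0 <= m -> m <= M -> M <= 1 -> m <= lw <= M ->
  c = lw - lw ^+ 2 -> M - M ^+ 2 <= b -> m - m ^+ 2 <= b ->
  (M * (1 - m) + (1 - M) * m) * (1 - (M * (1 - m) + (1 - M) * m)) <= b + c.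
Proof.
move=> h0 h1 h2 hlw ec hb1 hb2.
set X := M * (1 - m) + (1 - M) * m.
have key : X * (1 - X) <= (m - m ^+ 2) + (M - M ^+ 2).
  have hp : 0 <= (M - M ^+ 2) * (m - m ^+ 2) by apply: mulr_ge0; nra.
  rewrite /X; nra.
case: (conc hlw) => h; rewrite -ec in h; lra.
Qed.

Lemma core_ii m M lb b c : 0 <= m -> m <= M -> M <= 1 -> m <= lb <= M ->
  b = lb - lb ^+ 2 -> c <= M - M ^+ 2 -> c <= m - m ^+ 2 ->
  (M - m) ^+ 2 / 4 <= (M * (1 - m) + (1 - M) * m) - (b + c).
Proof.
move=> h0 h1 h2 /andP[l1 l2] eb hc1 hc2.
have [hM|hM] := leP M (1/2).
  have : b <= M - M ^+ 2.
    rewrite eb; have : 0 <= (M - lb) * (1 - M - lb) by apply: mulr_ge0; lra.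
    nra.
  nra.
have [hm|hm] := leP (1/2) m.
  have : b <= m - m ^+ 2.
    rewrite eb; have : 0 <= (lb - m) * (lb + m - 1) by apply: mulr_ge0; lra.
    nra.
  nra.
have hb : b <= 1/4 by rewrite eb; have := sqr_ge0 (lb - 1/2); nra.
have hpq : 0 <= (M - 1/2) * (1/2 - m) by apply: mulr_ge0; lra.
have [hs|hs] := leP (M + m) 1.
  have : (M - m) ^+ 2 <= 4 * (1/2 - m) ^+ 2 by nra.
  nra.
have : (M - m) ^+ 2 <= 4 * (M - 1/2) ^+ 2 by nra.
nra.
Qed.

Definition Xs (u v : R) := 2 * u * v - (u + v - 1).
Definition Ys (u v b w : R) := 2 * (u * v - b) - ((u + v - 1) - (b + w - 1)).
Definition Ds (u v b w : R) := Xs u v ^+ 2 - Ys u v b w.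
Definition Ss (u v b w : R) := Xs u v - Num.sqrt (Xs u v ^+ 2 - Ys u v b w).

Definition SH (u v b w : R) := exists lb lw,
  [/\ 0 <= 1 - v, 1 - v <= u, u <= 1, 1 - v <= lb <= u & 1 - v <= lw <= u] /\
  [/\ b = lb - lb ^+ 2, w = 1 - (lw - lw ^+ 2), u - u ^+ 2 <= b, (1 - v) - (1 - v) ^+ 2 <= b &
      (1 - (u - u ^+ 2) <= w /\ 1 - ((1 - v) - (1 - v) ^+ 2) <= w)].

Section SHs.
Variables u v b w : R.
Hypothesis hS : SH u v b w.

Lemma SH_D : 0 <= Ds u v b w.
Proof.
case: hS => lb [lw [[h0 h1 h2 hlb hlw] [eb ew hb1 hb2 [hw1 hw2]]]].
have := core_i (m := 1 - v) (M := u) (lw := lw) (b := b) (c := 1 - w) h0 h1 h2 hlw.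
rewrite ew subKr => /(_ erefl hb1 hb2).
rewrite /Ds /Ys /Xs -ew; nra.
Qed.

Lemma SH_ii : (u - (1 - v)) ^+ 2 / 4 <= Xs u v - (b + (1 - w)).
Proof.
case: hS => lb [lw [[h0 h1 h2 hlb hlw] [eb ew hb1 hb2 [hw1 hw2]]]].
have := core_ii (m := 1 - v) (M := u) (lb := lb) (b := b) (c := 1 - w) h0 h1 h2 hlb eb.
rewrite /Xs; move=> h; have : (1 - w) <= u - u ^+ 2 by lra.
have : (1 - w) <= (1 - v) - (1 - v) ^+ 2 by lra.
move=> a1 a2; have := h a2 a1; nra.
Qed.

Lemma SH_X : 0 <= Xs u v <= 1.
Proof.
case: hS => lb [lw [[h0 h1 h2 hlb hlw] _]].
have p1 : 0 <= u * v by apply: mulr_ge0; lra.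
have p2 : 0 <= (1 - u) * (1 - v) by apply: mulr_ge0; lra.
have p3 : 0 <= u * (1 - v) by apply: mulr_ge0; lra.
have p4 : 0 <= v * (1 - u) by apply: mulr_ge0; lra.
rewrite /Xs; apply/andP; split; nra.
Qed.

Lemma SH_range : 0 <= Ss u v b w <= 1.
Proof.
have hD := SH_D; have hii := SH_ii; have /andP[x0 x1] := SH_X.
rewrite /Ss; apply/andP; split.
  rewrite subr_ge0 sqrt_le' //.
  move: hD hii; rewrite /Ds /Ys /Xs; have := sqr_ge0 (u - (1 - v)); nra.
have := sqrtr_ge0 (Xs u v ^+ 2 - Ys u v b w); lra.
Qed.

Lemma SH_zero : Ss u v b w = 0 <-> u + v = 1.
Proof.
have hD := SH_D; have hii := SH_ii; have /andP[x0 x1] := SH_X.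
split.
  rewrite /Ss => e0.
  have e : Num.sqrt (Xs u v ^+ 2 - Ys u v b w) = Xs u v by lra.
  have e2 : Ds u v b w = Xs u v ^+ 2 by rewrite -[LHS](sqr_sqrtr hD) /Ds e.
  move: e2 hii; rewrite /Ds /Ys /Xs => e2 hii.
  have : (u - (1 - v)) ^+ 2 <= 0 by nra.
  have := sqr_ge0 (u - (1 - v)); nra.
move=> huv.
case: hS => lb [lw [[h0 h1 h2 hlb hlw] [eb ew hb1 hb2 [hw1 hw2]]]].
have ev : 1 - v = u by lra.
rewrite ev in hlb hlw; have elb : lb = u by lra.
have elw : lw = u by lra.
have ev' : v = 1 - u by lra.
have eY : Ys u v b w = 0 by rewrite /Ys eb ew elb elw ev'; ring.
by rewrite /Ss eY subr0 sqrtr_sqr ger0_norm // subrr.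
Qed.

Lemma SH_one : Ss u v b w = 1 <-> [/\ u = 1, v = 1 & b = 0].
Proof.
have hD := SH_D; have /andP[x0 x1] := SH_X.
case: hS => lb [lw [[h0 h1 h2 hlb hlw] [eb ew hb1 hb2 [hw1 hw2]]]].
have fb : 0 <= b by rewrite eb; nra.
have fw : w <= 1 by rewrite ew; nra.
split.
  rewrite /Ss => e.
  have hs := sqrtr_ge0 (Xs u v ^+ 2 - Ys u v b w).
  have eX : Xs u v = 1 by lra.
  have es : Num.sqrt (Xs u v ^+ 2 - Ys u v b w) = 0 by lra.
  move/eqP: es; rewrite sqrtr_eq0 => hD0.
  have eD : Ds u v b w = 0 by rewrite /Ds; apply/eqP; rewrite eq_le hD0 hD.
  have p3 : 0 <= u * (1 - v) by apply: mulr_ge0; lra.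
  have p4 : 0 <= v * (1 - u) by apply: mulr_ge0; lra.
  move: eX; rewrite /Xs => eX.
  have q3 : u * (1 - v) = 0 by nra.
  have q4 : v * (1 - u) = 0 by nra.
  have u0 : u != 0 by apply/eqP => u0; move: q4; rewrite u0; lra.
  have v1 : v = 1 by move: q3 => /eqP; rewrite mulf_eq0 (negbTE u0) /= subr_eq0 => /eqP.
  have u1 : u = 1 by move: q4; rewrite v1 mul1r => /eqP; rewrite subr_eq0 => /eqP.
  move: eD; rewrite /Ds /Ys /Xs u1 v1 => eD.
  split => //; nra.
case=> u1 v1 b0.
have w1 : w = 1 by move: hw2; rewrite v1; lra.
have eD : Xs u v ^+ 2 - Ys u v b w = 0 by rewrite /Ys /Xs u1 v1 b0 w1; ring.
by rewrite /Ss eD sqrtr0 subr0 /Xs u1 v1; ring.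
Qed.

End SHs.

Lemma sqrt_diff (a c : R) : 0 <= a -> 0 <= c ->
  `|Num.sqrt a - Num.sqrt c| <= Num.sqrt `|a - c|.
Proof.
wlog hac : a c / c <= a.
  move=> W ha hc; have [h|h] := leP c a; first exact: W.
  by rewrite distrC (distrC a); apply: W => //; apply: ltW.
move=> ha hc.
have ea : `|a - c| = a - c by rewrite ger0_norm // subr_ge0.
rewrite ea.
have h1 := sqr_sqrtr ha; have h2 := sqr_sqrtr hc.
have h3 : 0 <= a - c by rewrite subr_ge0.
have h4 := sqr_sqrtr h3.
have s1 := sqrtr_ge0 a; have s2 := sqrtr_ge0 c; have s3 := sqrtr_ge0 (a - c).
have mono : Num.sqrt c <= Num.sqrt a by rewrite ler_sqrt.
rewrite ger0_norm ?subr_ge0 //.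
move: h1 h2 h4 s1 s2 s3 mono; move: (Num.sqrt a) (Num.sqrt c) (Num.sqrt (a - c)) => x y z.
nra.
Qed.

Lemma SH_bounds u v b w : SH u v b w ->
  [/\ 0 <= u <= 1, 0 <= v <= 1, 0 <= b <= 1, 0 <= w <= 1 & 0 <= Ds u v b w].
Proof.
move=> hS; have hD := SH_D hS.
case: hS => lb [lw [[h0 h1 h2 hlb hlw] [eb ew hb1 hb2 [hw1 hw2]]]].
split => //; apply/andP; split; rewrite ?eb ?ew; nra.
Qed.

Lemma SH_cont u v b w u' v' b' w' eta : SH u v b w -> SH u' v' b' w' -> 0 <= eta ->
  `|u - u'| <= eta -> `|v - v'| <= eta -> `|b - b'| <= eta -> `|w - w'| <= eta ->
  `|Ss u v b w - Ss u' v' b' w'| <= 6 * eta + Num.sqrt (20 * eta).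
Proof.
move=> hS hS' he hu hv hb hw.
have [/andP[u0 u1] /andP[v0 v1] /andP[b0 b1] /andP[w0 w1] hD] := SH_bounds hS.
have [/andP[u0' u1'] /andP[v0' v1'] /andP[b0' b1'] /andP[w0' w1'] hD'] := SH_bounds hS'.
move: hu; rewrite ler_norml => /andP[hu1 hu2].
move: hv; rewrite ler_norml => /andP[hv1 hv2].
move: hb; rewrite ler_norml => /andP[hb1 hb2].
move: hw; rewrite ler_norml => /andP[hw1 hw2].
have hX : `|Xs u v - Xs u' v'| <= 6 * eta.
  rewrite ler_norml /Xs; apply/andP; split; nra.
have /andP[x0 x1] : 0 <= Xs u v <= 1 by rewrite /Xs; apply/andP; split; nra.
have /andP[x0' x1'] : 0 <= Xs u' v' <= 1 by rewrite /Xs; apply/andP; split; nra.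
have hDD : `|Ds u v b w - Ds u' v' b' w'| <= 20 * eta.
  have eD : forall a c d e, Ds a c d e = Xs a c ^+ 2 - Xs a c + d + (1 - e).
    by move=> a c d e; rewrite /Ds /Ys /Xs; ring.
  rewrite !eD; move: hX; rewrite !ler_norml => /andP[hX1 hX2].
  apply/andP; split; nra.
have hs : Num.sqrt `|Ds u v b w - Ds u' v' b' w'| <= Num.sqrt (20 * eta).
  by rewrite ler_sqrt // mulr_ge0.
have := sqrt_diff hD hD'.
rewrite /Ss -/(Ds u v b w) -/(Ds u' v' b' w') => hsd.
have : `|Xs u v - Num.sqrt (Ds u v b w) - (Xs u' v' - Num.sqrt (Ds u' v' b' w'))|
   <= `|Xs u v - Xs u' v'| + `|Num.sqrt (Ds u v b w) - Num.sqrt (Ds u' v' b' w')|.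
  have -> : Xs u v - Num.sqrt (Ds u v b w) - (Xs u' v' - Num.sqrt (Ds u' v' b' w'))
    = (Xs u v - Xs u' v') - (Num.sqrt (Ds u v b w) - Num.sqrt (Ds u' v' b' w')) by ring.
  exact: ler_normB.
lra.
Qed.

Lemma eta_ok (e : R) : 0 < e -> let eta := Num.min (e / 13) (e ^+ 2 / 81) in
  0 < eta /\ 6 * eta + Num.sqrt (20 * eta) < e.
Proof.
move=> he eta.
have h1 : eta <= e / 13 by rewrite /eta ge_min lexx.
have h2 : eta <= e ^+ 2 / 81 by rewrite /eta ge_min lexx orbT.
have h0 : 0 < eta by rewrite /eta lt_min !divr_gt0 // exprn_gt0.
split => //.
have : Num.sqrt (20 * eta) <= e / 2.
  rewrite sqrt_le'; last lra.
  nra.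
lra.
Qed.

End Sc.

Section Basics.
Variables (R : realType) (H : lmodType R[i]) (ip : H -> H -> R[i]).
Hypothesis hip : inner_product ip.

Definition rip (x y : H) : R := complex.Re (ip x y).
Definition nn (x : H) : R := rip x x.
Definition sc (r : R) (x : H) : H := (r%:C)%C *: x.

Lemma ipDl x y z : ip (x + y) z = ip x z + ip y z.
Proof. by case: hip => L _ _ _; have := L 1 x y z; rewrite scale1r mul1r. Qed.

Lemma ip0l z : ip 0 z = 0.
Proof.
have := ipDl 0 0 z; rewrite addr0 => /(congr1 (fun t => t - ip 0 z)).
by rewrite subrr addrK.
Qed.

Lemma ipZl a x z : ip (a *: x) z = a * ip x z.
Proof. by case: hip => L _ _ _; have := L a x 0 z; rewrite addr0 ip0l addr0. Qed.

Lemma ipC x y : ip y x = (ip x y)^*%C.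
Proof. by case: hip => _ C _ _; apply: C. Qed.

Lemma ReJ (z : R[i]) : complex.Re (z^*%C) = complex.Re z.
Proof. by case: z. Qed.

Lemma ReD (z w : R[i]) : complex.Re (z + w) = complex.Re z + complex.Re w.
Proof. by case: z; case: w. Qed.

Lemma ReN (z : R[i]) : complex.Re (- z) = - complex.Re z.
Proof. by case: z. Qed.

Lemma ReM_C (r : R) (z : R[i]) : complex.Re ((r%:C)%C * z) = r * complex.Re z.
Proof. by case: z => a b /=; rewrite mul0r subr0. Qed.

Lemma ripC x y : rip y x = rip x y.
Proof. by rewrite /rip ipC ReJ. Qed.

Lemma ripDl x y z : rip (x + y) z = rip x z + rip y z.
Proof. by rewrite /rip ipDl ReD. Qed.

Lemma ripDr x y z : rip z (x + y) = rip z x + rip z y.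
Proof. by rewrite ripC ripDl !(ripC z). Qed.

Lemma ripZl r x z : rip (sc r x) z = r * rip x z.
Proof. by rewrite /rip /sc ipZl ReM_C. Qed.

Lemma ripZr r x z : rip z (sc r x) = r * rip z x.
Proof. by rewrite ripC ripZl ripC. Qed.

Lemma scN1 x : - x = sc (-1) x.
Proof. by rewrite /sc -(scaleN1r x); congr (_ *: _); apply/eqP; rewrite eq_complex /= oppr0 !eqxx. Qed.

Lemma ripNl x z : rip (- x) z = - rip x z.
Proof. by rewrite scN1 ripZl mulN1r. Qed.

Lemma ripNr x z : rip z (- x) = - rip z x.
Proof. by rewrite ripC ripNl ripC. Qed.

Lemma ripBl x y z : rip (x - y) z = rip x z - rip y z.
Proof. by rewrite ripDl ripNl. Qed.

Lemma ripBr x y z : rip z (x - y) = rip z x - rip z y.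
Proof. by rewrite ripDr ripNr. Qed.

Lemma rip0l z : rip 0 z = 0.
Proof. by rewrite /rip ip0l. Qed.
Lemma rip0r z : rip z 0 = 0.
Proof. by rewrite ripC rip0l. Qed.

Lemma nn_ge0 x : 0 <= nn x.
Proof. case: hip => _ _ P _; move: (P x); rewrite lecE => /andP[_ h]; exact: h. Qed.

Lemma ipxx x : ip x x = ((nn x)%:C)%C.
Proof.
case: hip => _ _ P _; have := P x; rewrite /nn /rip.
case: (ip x x) => a b; rewrite lecE /= => /andP[/eqP hb _].
by apply/eqP; rewrite eq_complex /= -hb !eqxx.
Qed.

Lemma nn_eq0 x : nn x = 0 -> x = 0.
Proof. by case: hip => _ _ _ D => h; apply: D; rewrite ipxx h. Qed.

Lemma hnorm_nn x : hnorm ip x = Num.sqrt (nn x).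
Proof. by []. Qed.

Lemma scA r s x : sc r (sc s x) = sc (r * s) x.
Proof. by rewrite /sc scalerA; congr (_ *: _); apply/eqP; rewrite eq_complex /= !mul0r !mulr0 subr0 addr0 !eqxx. Qed.

Lemma sc1 x : sc 1 x = x.
Proof. by rewrite /sc scale1r. Qed.

Lemma sc0 x : sc 0 x = 0.
Proof. by rewrite /sc scale0r. Qed.

Lemma scDl r s x : sc (r + s) x = sc r x + sc s x.
Proof. by rewrite /sc -scalerDl; congr (_ *: _); apply/eqP; rewrite eq_complex /= addr0 !eqxx. Qed.

Lemma scDr r x y : sc r (x + y) = sc r x + sc r y.
Proof. by rewrite /sc scalerDr. Qed.

Lemma scNr r x : sc r (- x) = - sc r x.
Proof. by rewrite /sc scalerN. Qed.

Lemma scBr r x y : sc r (x - y) = sc r x - sc r y.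
Proof. by rewrite /sc scalerBr. Qed.

Lemma nnZ r x : nn (sc r x) = r ^+ 2 * nn x.
Proof. by rewrite /nn ripZl ripZr mulrA expr2. Qed.

Lemma nnD x y : nn (x + y) = nn x + 2 * rip x y + nn y.
Proof. rewrite /nn ripDl !ripDr (ripC y x); ring. Qed.

Lemma nnB x y : nn (x - y) = nn x - 2 * rip x y + nn y.
Proof. rewrite /nn ripBl !ripBr (ripC y x); ring. Qed.

Lemma CS x y : rip x y ^+ 2 <= nn x * nn y.
Proof.
have [y0|ny] := eqVneq (nn y) 0.
  by rewrite y0 mulr0 (nn_eq0 y0) rip0r expr0n.
have hy : 0 < nn y by rewrite lt_def ny nn_ge0.
have := nn_ge0 (x - sc (rip x y / nn y) y).
rewrite nnB nnZ ripZr => h.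
have e : rip x y / nn y * nn y = rip x y by rewrite mulfVK.
rewrite -subr_ge0; move: h; set a := rip x y; set b := nn y; set c := nn x.
move=> h.
have -> : c * b - a ^+ 2 = b * (c - 2 * (a / b * a) + (a / b) ^+ 2 * b).
  by rewrite /b; field; rewrite ny.
by apply: mulr_ge0 => //; rewrite ltW.
Qed.


Lemma hnormE x : hnorm ip x = Num.sqrt (nn x).
Proof. by []. Qed.

Lemma sqrt_le (a u : R) : 0 <= u -> (Num.sqrt a <= u) = (a <= u ^+ 2).
Proof.
move=> hu; have [ha|ha] := leP 0 a.
  by rewrite -{1}(ger0_norm hu) -sqrtr_sqr ler_sqrt ?sqr_ge0.
rewrite ltr0_sqrtr // hu; apply/esym; apply: le_trans (ltW ha) _; exact: sqr_ge0.
Qed.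

Definition lin (T : H -> H) := is_linear_op T.
Definition bnd (T : H -> H) := exists K, forall x, nn (T x) <= K * nn x.
Definition sym (T : H -> H) := forall x y, rip (T x) y = rip x (T y).

Lemma lin0 T : lin T -> T 0 = 0.
Proof.
move=> L; have := L 1 0 0; rewrite !scale1r !addr0.
by move=> /(congr1 (fun t => t - T 0)); rewrite subrr addrK.
Qed.

Lemma linD T x y : lin T -> T (x + y) = T x + T y.
Proof. by move=> L; have := L 1 x y; rewrite !scale1r. Qed.

Lemma linZ T a x : lin T -> T (a *: x) = a *: T x.
Proof. by move=> L; have := L a x 0; rewrite !addr0 (lin0 L) addr0. Qed.

Lemma linsc T r x : lin T -> T (sc r x) = sc r (T x).
Proof. exact: linZ. Qed.

Lemma linN T x : lin T -> T (- x) = - T x.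
Proof. by move=> L; rewrite !scN1 linsc. Qed.

Lemma linB T x y : lin T -> T (x - y) = T x - T y.
Proof. by move=> L; rewrite linD // linN. Qed.

Definition SS (T : H -> H) := [set hnorm ip (T x) | x in [set x : H | hnorm ip x <= 1]].

Lemma opnormE T : opnorm ip T = sup (SS T).
Proof. by []. Qed.

Lemma nn0 : nn 0 = 0.
Proof. by rewrite /nn rip0l. Qed.

Lemma SS0 T : lin T -> SS T 0.
Proof. move=> L; exists 0; first by rewrite /= hnormE nn0 sqrtr0 ler01. by rewrite (lin0 L) hnormE nn0 sqrtr0. Qed.

Lemma has_sup_S T : lin T -> bnd T -> has_sup (SS T).
Proof.
move=> L [K hK]; split; first by exists 0; exact: SS0.
exists (Num.sqrt (Num.max K 0)) => _ [x hx <-].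
rewrite hnormE ler_sqrt; last by rewrite le_max lexx orbT.
move: hx; rewrite /= hnormE sqrt_le ?ler01 // expr1n => hx.
have := hK x; have := nn_ge0 x; have : K <= Num.max K 0 by rewrite le_max lexx.
have : 0 <= Num.max K 0 by rewrite le_max lexx orbT.
move: (Num.max K 0) => M. nra.
Qed.

Lemma opnorm_ge0 T : lin T -> bnd T -> 0 <= opnorm ip T.
Proof. by move=> L B; apply: sup_upper_bound (has_sup_S L B) _ (SS0 L). Qed.

Lemma nnsc_norm x : 0 < nn x -> nn (sc (Num.sqrt (nn x))^-1 x) = 1.
Proof.
move=> hx; rewrite nnZ exprVn sqr_sqrtr ?ltW // mulVf //; exact: lt0r_neq0.
Qed.

Lemma opnorm_bound T x : lin T -> bnd T -> nn (T x) <= opnorm ip T ^+ 2 * nn x.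
Proof.
move=> L B; have [x0|nx] := eqVneq (nn x) 0.
  by rewrite (nn_eq0 x0) (lin0 L) nn0 mulr0.
have hx : 0 < nn x by rewrite lt_def nx nn_ge0.
set s := Num.sqrt (nn x); have hs : 0 < s by rewrite sqrtr_gt0.
have e : s ^+ 2 = nn x by rewrite sqr_sqrtr ?ltW.
have := sup_upper_bound (has_sup_S L B) (x := hnorm ip (T (sc s^-1 x))).
rewrite -opnormE => h.
have : hnorm ip (T (sc s^-1 x)) <= opnorm ip T.
  by apply: h; exists (sc s^-1 x) => //; rewrite /= hnormE nnsc_norm // sqrtr1.
rewrite hnormE sqrt_le ?opnorm_ge0 // linsc // nnZ exprVn e => h2.
by rewrite -ler_pdivrMr // mulrC.
Qed.

Lemma opnorm_le T K : lin T -> 0 <= K -> (forall x, nn (T x) <= K ^+ 2 * nn x) -> opnorm ip T <= K.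
Proof.
move=> L hK hb; rewrite opnormE; apply: ge_sup; first by exists 0; exact: SS0.
move=> _ [x hx <-]; rewrite hnormE sqrt_le //.
move: hx; rewrite /= hnormE sqrt_le ?ler01 // expr1n => hx.
apply: le_trans (hb x) _; have := nn_ge0 x; have := sqr_ge0 K; nra.
Qed.

Lemma opnorm_approx T : lin T -> bnd T -> (exists x : H, x <> 0) ->
  forall d, 0 < d -> exists y, nn y = 1 /\ opnorm ip T ^+ 2 - d <= nn (T y).
Proof.
move=> L B [x0 hx0] d hd; set u := opnorm ip T.
have hu := opnorm_ge0 L B.
have [hle|hgt] := leP (u ^+ 2 - d) 0.
  have hn0 : 0 < nn x0.
    by rewrite lt_def nn_ge0 andbT; apply/eqP => /nn_eq0 /hx0.
  exists (sc (Num.sqrt (nn x0))^-1 x0); split; first exact: nnsc_norm.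
  by apply: le_trans hle (nn_ge0 _).
have upos : 0 < u by rewrite lt_def hu andbT; apply/eqP => u0; move: hgt; rewrite u0 expr0n /=; lra.
set e := d / (2 * u).
have he : 0 < e by rewrite divr_gt0 // mulr_gt0.
have hue : 0 < u - e.
  rewrite subr_gt0 /e ltr_pdivrMr ?mulr_gt0 //. move: hgt; rewrite subr_gt0; nra.
have [_ [x hx <-] hlt] := sup_adherent he (has_sup_S L B).
rewrite -opnormE -/u in hlt.
move: hx; rewrite /= hnormE sqrt_le ?ler01 // expr1n => hx.
have hTx : (u - e) ^+ 2 < nn (T x).
  move: hlt; rewrite hnormE => hlt.
  have hsq := sqr_sqrtr (nn_ge0 (T x)).
  have := sqrtr_ge0 (nn (T x)); move: hlt hsq; move: (Num.sqrt (nn (T x))) => t; nra.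
have hue2 : u ^+ 2 - d <= (u - e) ^+ 2.
  have : e * (2 * u) = d by rewrite /e mulfVK // mulf_neq0 // lt0r_neq0.
  nra.
have nx : 0 < nn x.
  rewrite lt_def nn_ge0 andbT; apply/eqP => /nn_eq0 xz.
  by move: hTx; rewrite xz (lin0 L) nn0; nra.
exists (sc (Num.sqrt (nn x))^-1 x); split; first exact: nnsc_norm.
rewrite linsc // nnZ exprVn sqr_sqrtr ?ltW //.
have : nn (T x) <= (nn x)^-1 * nn (T x).
  rewrite ler_pMl ?(lt_trans _ hTx) ?exprn_gt0 // invf_ge1 //.
lra.
Qed.

Lemma linU T c : lin T -> lin (fun z => T z - sc c z).
Proof.
move=> L a z w; rewrite L /sc scalerDr scalerBr !scalerA (mulrC a).
by rewrite opprD addrACA.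
Qed.

Lemma symU T c : sym T -> sym (fun z => T z - sc c z).
Proof. by move=> S z w; rewrite ripBl ripBr ripZl ripZr S. Qed.

Lemma polar U x y : lin U -> sym U ->
  rip (U (x + y)) (x + y) - rip (U (x - y)) (x - y) = 4 * rip (U x) y.
Proof.
move=> L S; rewrite linD // linB // !ripDl !ripDr !ripNl !ripNr.
rewrite (S y x) (ripC (U x) y); ring.
Qed.

Lemma NL0 U r : lin U -> sym U -> 0 <= r ->
  (forall x, `|rip (U x) x| <= r * nn x) ->
  forall x, nn (U x) <= r ^+ 2 * nn x.
Proof.
move=> L S hr hb x.
have key : forall s, 4 * (s * nn (U x)) <= 2 * r * (nn x + s ^+ 2 * nn (U x)).
  move=> s; set y := sc s (U x).
  have hp := polar x y L S.
  have h1 := hb (x + y); have h2 := hb (x - y).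
  have e1 : rip (U x) y = s * nn (U x) by rewrite /y ripZr.
  have e2 : nn (x + y) + nn (x - y) = 2 * (nn x + s ^+ 2 * nn (U x)).
    rewrite nnD nnB /y nnZ; ring.
  rewrite -e1 -hp; move: h1 h2 e2.
  move: (rip (U (x + y)) (x + y)) (rip (U (x - y)) (x - y)) => P Q.
  rewrite !ler_norml => /andP[h1 h1'] /andP[h2 h2'] e2. nra.
have ha := nn_ge0 (U x); have hn := nn_ge0 x.
have [r0|rp] := eqVneq r 0.
  by have := key 1; rewrite r0 expr1n mul1r; nra.
have rpos : 0 < r by rewrite lt_def rp hr.
have := key r^-1; have e : r * r^-1 = 1 by rewrite mulfV.
move=> k; rewrite -subr_ge0.
have -> : r ^+ 2 * nn x - nn (U x) = r ^+ 2 / 2 * (2 * r * (nn x + r^-1 ^+ 2 * nn (U x)) - 4 * (r^-1 * nn (U x))) / r.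
  by field.
apply: divr_ge0; last exact: ltW.
apply: mulr_ge0; first by apply: divr_ge0 => //; apply: sqr_ge0.
by rewrite subr_ge0.
Qed.

Lemma NL T c r : lin T -> sym T -> 0 <= r ->
  (forall x, `|rip (T x) x - c * nn x| <= r * nn x) ->
  forall x, nn (T x - sc c x) <= r ^+ 2 * nn x.
Proof.
move=> L S hr hb x.
apply: (NL0 (U := fun z => T z - sc c z)) => //; [exact: linU|exact: symU|].
by move=> z; rewrite ripBl ripZl.
Qed.

Definition ap (T : H -> H) (l : R) :=
  forall e, 0 < e -> exists y, nn y = 1 /\ nn (T y - sc l y) <= e.

Definition pos (T : H -> H) := [/\ lin T, sym T, bnd T & forall x, 0 <= rip (T x) x].

Lemma ap_rip T l : ap T l -> forall e, 0 < e ->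
  exists y, nn y = 1 /\ (rip (T y) y - l) ^+ 2 <= e.
Proof.
move=> A e he; have [y [y1 hy]] := A e he; exists y; split => //.
have := CS (T y - sc l y) y; rewrite ripBl ripZl -/(nn y) y1 mulr1.
by move=> h; rewrite mulr1 in h; exact: le_trans h hy.
Qed.

Lemma ap_le T l K : (forall y, nn y = 1 -> rip (T y) y <= K) -> ap T l -> l <= K.
Proof.
move=> hK A; rewrite leNgt; apply/negP => hl.
have he : 0 < (l - K) ^+ 2 / 2 by rewrite divr_gt0 // exprn_gt0 // subr_gt0.
have [y [y1 hy]] := ap_rip A he; have := hK y y1; nra.
Qed.

Lemma ap_ge T l K : (forall y, nn y = 1 -> K <= rip (T y) y) -> ap T l -> K <= l.
Proof.
move=> hK A; rewrite leNgt; apply/negP => hl.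
have he : 0 < (K - l) ^+ 2 / 2 by rewrite divr_gt0 // exprn_gt0 // subr_gt0.
have [y [y1 hy]] := ap_rip A he; have := hK y y1; nra.
Qed.

Section Pos.
Variable T : H -> H.
Hypothesis hT : pos T.
Hypothesis hne : exists x : H, x <> 0.

Let u := opnorm ip T.
Lemma pos_u0 : 0 <= u.
Proof. by case: hT => L _ B _; apply: opnorm_ge0. Qed.

Lemma pos_P1 x : rip (T x) x <= u * nn x.
Proof.
case: hT => L _ B P.
have h1 := CS (T x) x; have h2 := opnorm_bound x L B.
have h3 := P x; have h4 := nn_ge0 x; have h5 := pos_u0; rewrite -/u in h2.
have h6 := nn_ge0 (T x).
have : rip (T x) x ^+ 2 <= (u * nn x) ^+ 2.
  apply: le_trans h1 _; rewrite exprMn; nra.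
move=> h; rewrite -(ler_pXn2r (n := 2)) // nnegrE ?mulr_ge0 //.
Qed.

Lemma pos_P2 x : nn (T x) <= u * rip (T x) x.
Proof.
case: hT => L S B P.
have := NL (c := u / 2) (r := u / 2) L S _ _ x.
rewrite nnB nnZ ripZr => h.
have hu := pos_u0.
have : nn (T x) - 2 * (u / 2 * rip (T x) x) + (u / 2) ^+ 2 * nn x <= (u / 2) ^+ 2 * nn x.
  apply: h; first by rewrite divr_ge0.
  move=> z; have := P z; have := pos_P1 z; have := nn_ge0 z.
  move: (rip (T z) z) (nn z) => t n h1 h2 h3.
  rewrite ler_norml; apply/andP; split; nra.
lra.
Qed.

Lemma pos_P3 : ap T u.
Proof.
case: hT => L S B P => e he.
have [y [y1 hy]] := opnorm_approx L B hne he.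
exists y; split => //.
rewrite nnB nnZ ripZr y1.
have := pos_P2 y; have := pos_P1 y; rewrite y1 -/u in hy *.
nra.
Qed.

Lemma pos_P4 l : ap T l -> 0 <= l <= u.
Proof.
case: hT => L S B P => A; apply/andP; split.
  by apply: ap_ge A => y _; apply: P.
by apply: ap_le A => y y1; have := pos_P1 y; rewrite y1 mulr1.
Qed.

End Pos.

Ltac ripexp := rewrite /nn; rewrite !(ripDl, ripDr, ripNl, ripNr, ripZl, ripZr).

Lemma nnN x : nn (- x) = nn x.
Proof. by rewrite /nn ripNl ripNr opprK. Qed.

Lemma nnB_le x y : nn (x - y) <= 2 * nn x + 2 * nn y.
Proof. have := nn_ge0 (x + y); rewrite nnB nnD; lra. Qed.

Lemma nnD_le x y : nn (x + y) <= 2 * nn x + 2 * nn y.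
Proof. have := nn_ge0 (x - y); rewrite nnB nnD; lra. Qed.

Lemma lin_compl T : lin T -> lin (compl T).
Proof. by move=> L a x y; rewrite /compl L scalerBr opprD addrACA. Qed.

Lemma sym_compl T : sym T -> sym (compl T).
Proof. by move=> S x y; rewrite /compl ripBl ripBr S. Qed.

Lemma bnd_compl T : bnd T -> bnd (compl T).
Proof.
move=> [K hK]; exists (2 + 2 * Num.max K 0) => x; rewrite /compl.
apply: le_trans (nnB_le _ _) _.
have := hK x; have := nn_ge0 x; have : K <= Num.max K 0 by rewrite le_max lexx.
move: (Num.max K 0) => M; nra.
Qed.

Lemma lin_opmul T U : lin T -> lin U -> lin (opmul T U).
Proof. by move=> LT LU a x y; rewrite /opmul LU LT. Qed.

Lemma bnd_opmul T U : bnd T -> bnd U -> bnd (opmul T U).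
Proof.
move=> [K hK] [K' hK']; exists (Num.max K 0 * Num.max K' 0) => x; rewrite /opmul.
have h1 := hK (U x); have h2 := hK' x; have := nn_ge0 x; have := nn_ge0 (U x).
have : K <= Num.max K 0 by rewrite le_max lexx.
have : K' <= Num.max K' 0 by rewrite le_max lexx.
have : 0 <= Num.max K 0 by rewrite le_max lexx orbT.
have : 0 <= Num.max K' 0 by rewrite le_max lexx orbT.
move: (Num.max K 0) (Num.max K' 0) => M M' hM' hM hKM hKM' hu hx.
have s1 : nn (T (U x)) <= M * nn (U x) by nra.
have s2 : nn (U x) <= M' * nn x by nra.
have s3 : M * nn (U x) <= M * (M' * nn x) by apply: ler_wpM2l.
by rewrite -mulrA; apply: le_trans s1 s3.
Qed.

Lemma bnd_of T : bounded_op ip T -> lin T /\ bnd T.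
Proof.
move=> [L [M hM]]; split => //; exists (M ^+ 2) => x.
have := hM x; rewrite !hnormE => h.
have h1 := sqr_sqrtr (nn_ge0 (T x)); have h2 := sqr_sqrtr (nn_ge0 x).
have h3 := sqrtr_ge0 (nn (T x)); have h4 := sqrtr_ge0 (nn x).
rewrite -h1 -h2; move: h h3 h4; move: (Num.sqrt (nn (T x))) (Num.sqrt (nn x)) => a c.
nra.
Qed.

Lemma ap_compl T m : lin T -> (ap (compl T) m <-> ap T (1 - m)).
Proof.
have e : forall y, nn (compl T y - sc m y) = nn (T y - sc (1 - m) y).
  move=> y; rewrite /compl; ripexp; rewrite (ripC (T y) y); ring.
by move=> L; split => A ee he; have [y [y1 hy]] := A ee he; exists y; rewrite ?e // -e.
Qed.

Section Eff.
Variable E : H -> H.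
Hypothesis hE : effect ip E.

Lemma eff_lb : lin E /\ bnd E.
Proof. by case: hE => B _ _; apply: bnd_of. Qed.
Lemma eff_lin : lin E. Proof. by case: eff_lb. Qed.
Lemma eff_bnd : bnd E. Proof. by case: eff_lb. Qed.
Lemma eff_sym : sym E.
Proof. by case: hE => _ S _ x y; rewrite /rip S. Qed.
Lemma eff_rip x : 0 <= rip (E x) x <= nn x.
Proof.
case: hE => _ _ P; have /andP[h1 h2] := P x.
by rewrite /rip /nn; move: h1 h2; rewrite !lecE => /andP[_ ->] /andP[_ ->].
Qed.
Lemma eff_pos : pos E.
Proof.
split; [exact: eff_lin|exact: eff_sym|exact: eff_bnd|].
by move=> x; case/andP: (eff_rip x).
Qed.

Lemma eff_qt x : nn (E x) <= rip (E x) x.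
Proof.
have := NL (c := 1/2) (r := 1/2) eff_lin eff_sym _ _ x.
rewrite nnB nnZ ripZr => h.
have : nn (E x) - 2 * (1 / 2 * rip (E x) x) + (1 / 2) ^+ 2 * nn x <= (1 / 2) ^+ 2 * nn x.
  apply: h; [lra|move=> z]; have /andP[h1 h2] := eff_rip z.
  rewrite ler_norml; apply/andP; split; lra.
lra.
Qed.

Lemma compl_pos : pos (compl E).
Proof.
split; [exact: lin_compl eff_lin|exact: sym_compl eff_sym|exact: bnd_compl eff_bnd|].
move=> x; rewrite /compl ripBl subr_ge0; by case/andP: (eff_rip x).
Qed.

Definition T1 := opmul E (compl E).

Lemma T1E x : T1 x = E x - E (E x).
Proof. by rewrite /T1 /opmul /compl (linB _ _ eff_lin). Qed.

Lemma T1_rip x : rip (T1 x) x = rip (E x) x - nn (E x).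
Proof. by rewrite T1E ripBl (eff_sym (E x) x). Qed.

Lemma T1_pos : pos T1.
Proof.
split; [exact: lin_opmul eff_lin (lin_compl eff_lin)| |
        exact: bnd_opmul eff_bnd (bnd_compl eff_bnd)|].
  by move=> x y; rewrite !T1E ripBl ripBr (eff_sym (E x) y) (eff_sym x (E y)) (eff_sym x y).
by move=> x; rewrite T1_rip subr_ge0 eff_qt.
Qed.

Lemma T2_pos : pos (compl T1).
Proof.
case: T1_pos => L S B _.
split; [exact: lin_compl L|exact: sym_compl S|exact: bnd_compl B|].
move=> x; rewrite /compl ripBl T1_rip; have /andP[h1 h2] := eff_rip x.
have := nn_ge0 (E x); lra.
Qed.

End Eff.

Lemma normalize_nn T r y : lin T -> 0 < nn y ->
  nn (T (sc (Num.sqrt (nn y))^-1 y) - sc r (sc (Num.sqrt (nn y))^-1 y))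
  = nn (T y - sc r y) / nn y.
Proof.
move=> L hy; rewrite linsc // scA mulrC -scA -scBr nnZ exprVn sqr_sqrtr ?ltW //.
by rewrite mulrC.
Qed.

Lemma notap T r : lin T -> ~ ap T r ->
  exists e, 0 < e /\ forall y, e * nn y <= nn (T y - sc r y).
Proof.
move=> L nA.
have [e he0] := not_all_ex_not _ _ nA.
have [he hne] := imply_to_and _ _ he0.
exists e; split => // y.
have [y0|ny] := eqVneq (nn y) 0; first by rewrite y0 mulr0 nn_ge0.
have hy : 0 < nn y by rewrite lt_def ny nn_ge0.
have := not_ex_all_not _ _ hne (sc (Num.sqrt (nn y))^-1 y).
move=> /not_and_or [|]; first by rewrite nnsc_norm.
rewrite normalize_nn // => /negP; rewrite -ltNge ltr_pdivlMr // => h.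
exact: ltW.
Qed.

Section Spec.
Variable E : H -> H.
Hypothesis hE : effect ip E.
Hypothesis hne : exists x : H, x <> 0.

Let u := opnorm ip E.
Let v := opnorm ip (compl E).
Let b := opnorm ip (T1 E).
Let w := opnorm ip (compl (T1 E)).

Lemma sig_u : ap E u.
Proof. exact: pos_P3 (eff_pos hE) hne. Qed.

Lemma sig_le l : ap E l -> 0 <= l <= u.
Proof. by move=> A; have := pos_P4 (eff_pos hE) A. Qed.

Lemma sig_v : ap E (1 - v).
Proof. by apply/(ap_compl _ (eff_lin hE)); apply: pos_P3 (compl_pos hE) hne. Qed.

Lemma sig_ge l : ap E l -> 0 <= 1 - l <= v.
Proof.
move=> A; have : ap (compl E) (1 - l) by apply/(ap_compl _ (eff_lin hE)); rewrite subKr.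
by move/(pos_P4 (compl_pos hE)).
Qed.

Lemma T1_fwd l : ap E l -> ap (T1 E) (l - l ^+ 2).
Proof.
move=> A e he.
have hu : 0 <= u := opnorm_ge0 (eff_lin hE) (eff_bnd hE).
set K := 2 * (1 - l) ^+ 2 + 2 * u ^+ 2 + 1.
have hK : 0 < K by rewrite /K; have := sqr_ge0 (1 - l); have := sqr_ge0 u; lra.
have [y [y1 hy]] := A (e / K) (divr_gt0 he hK).
exists y; split => //.
set z := E y - sc l y.
have eq : nn (T1 E y - sc (l - l ^+ 2) y) = nn (sc (1 - l) z - E z).
  rewrite T1E // /z (linB _ _ (eff_lin hE)) (linsc _ _ (eff_lin hE)).
  ripexp.
  rewrite (ripC (E y) y) (ripC (E (E y)) y) (ripC (E (E y)) (E y)); ring.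
rewrite eq; apply: le_trans (nnB_le _ _) _.
rewrite nnZ.
have h1 := opnorm_bound z (eff_lin hE) (eff_bnd hE); rewrite -/u in h1.
have hz := nn_ge0 z.
have : nn z * K <= e by rewrite -ler_pdivlMr.
rewrite /K; have := sqr_ge0 (1 - l); nra.
Qed.

Lemma T1_bwd m : ap (T1 E) m -> exists l, ap E l /\ m = l - l ^+ 2.
Proof.
move=> A.
have m0 : 0 <= m by case/andP: (pos_P4 (T1_pos hE) A).
have m4 : m <= 1 / 4.
  apply: ap_le A => y y1; rewrite T1_rip //.
  have := CS (E y) y; rewrite y1 mulr1 -/(nn (E y)); have := sqr_ge0 (rip (E y) y - 1 / 2); nra.
set s := Num.sqrt (1 - 4 * m).
have hs : s ^+ 2 = 1 - 4 * m by rewrite sqr_sqrtr //; lra.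
set r2 := (1 + s) / 2.
have hm : m = r2 - r2 ^+ 2 by rewrite /r2; nra.
case: (classic (ap E r2)) => [h2|n2]; first by exists r2.
case: (classic (ap E (1 - r2))) => [h1|n1]; first by exists (1 - r2); split => //; rewrite hm; ring.
have [e1 [he1 b1]] := notap (eff_lin hE) n1.
have [e2 [he2 b2]] := notap (eff_lin hE) n2.
have [y [y1 hy]] := A (e1 * e2 / 2) (divr_gt0 (mulr_gt0 he1 he2) (ltr0Sn _ 1)).
set z := E y - sc r2 y.
have eq : nn (T1 E y - sc m y) = nn (E z - sc (1 - r2) z).
  rewrite T1E // /z (linB _ _ (eff_lin hE)) (linsc _ _ (eff_lin hE)) hm.
  ripexp.
  rewrite (ripC (E y) y) (ripC (E (E y)) y) (ripC (E (E y)) (E y)); ring.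
have := b1 z; have := b2 y; rewrite y1 mulr1 -eq => h2 h1.
have hz := nn_ge0 z.
have : e1 * e2 <= e1 * nn z by apply: ler_wpM2l => //; exact: ltW.
nra.
Qed.

Lemma b_fact1 : exists lb, ap E lb /\ b = lb - lb ^+ 2.
Proof. exact: T1_bwd (pos_P3 (T1_pos hE) hne). Qed.

Lemma b_fact2 l : ap E l -> l - l ^+ 2 <= b.
Proof. by move=> A; case/andP: (pos_P4 (T1_pos hE) (T1_fwd A)). Qed.

Lemma w_fact1 : exists lw, ap E lw /\ w = 1 - (lw - lw ^+ 2).
Proof.
have := pos_P3 (T2_pos hE) hne.
move/(ap_compl _ (lin_opmul (eff_lin hE) (lin_compl (eff_lin hE)))) => /T1_bwd [l [A e]].
by exists l; split => //; rewrite -e -/w; ring.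
Qed.

Lemma w_fact2 l : ap E l -> 1 - (l - l ^+ 2) <= w.
Proof.
move=> A; have := T1_fwd A => B.
have : ap (compl (T1 E)) (1 - (l - l ^+ 2)).
  by apply/(ap_compl _ (lin_opmul (eff_lin hE) (lin_compl (eff_lin hE)))); rewrite subKr.
by move=> /(pos_P4 (T2_pos hE)) /andP[].
Qed.

End Spec.

Section Final.
Hypothesis hne : exists x : H, x <> 0.

Notation U4 E := (opnorm ip E, opnorm ip (compl E), opnorm ip (T1 E), opnorm ip (compl (T1 E))).

Lemma S2_eq E : S2 ip E = Ss (opnorm ip E) (opnorm ip (compl E)) (opnorm ip (T1 E)) (opnorm ip (compl (T1 E))).
Proof. by []. Qed.

Lemma Y_eq E : Yq ip E = Ys (opnorm ip E) (opnorm ip (compl E)) (opnorm ip (T1 E)) (opnorm ip (compl (T1 E))).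
Proof. by []. Qed.

Lemma X_eq E : Xq ip E = Xs (opnorm ip E) (opnorm ip (compl E)).
Proof. by []. Qed.

Lemma SH_eff E : effect ip E ->
  SH (opnorm ip E) (opnorm ip (compl E)) (opnorm ip (T1 E)) (opnorm ip (compl (T1 E))).
Proof.
move=> hE.
have [lb [Ab eb]] := b_fact1 hE hne.
have [lw [Aw ew]] := w_fact1 hE hne.
have /andP[_ hv] := sig_le hE (sig_v hE hne).
have /andP[hv0 _] := sig_le hE (sig_v hE hne).
have /andP[hu1 _] := sig_ge hE (sig_u hE hne).
have /andP[_ hb1] := sig_le hE Ab. have /andP[_ hb2] := sig_ge hE Ab.
have /andP[_ hw1] := sig_le hE Aw. have /andP[_ hw2] := sig_ge hE Aw.
exists lb, lw; split.
  split; try (apply/andP; split); lra.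
split => //.
- have h := b_fact2 hE (sig_u hE hne). exact h.
- have h := b_fact2 hE (sig_v hE hne); exact h.
- have h1 := w_fact2 hE (sig_u hE hne); have h2 := w_fact2 hE (sig_v hE hne).
  by split.
Qed.

End Final.

Lemma zero_opnorm (hz : forall x : H, x = 0) T : opnorm ip T = 0.
Proof.
have S0 : SS T 0.
  exists 0; first by rewrite /= hnormE nn0 sqrtr0 ler01.
  by rewrite (hz (T 0)) hnormE nn0 sqrtr0.
have ub : ubound (SS T) 0 by move=> _ [x _ <-]; rewrite (hz (T x)) hnormE nn0 sqrtr0.
apply/eqP; rewrite eq_le; apply/andP; split.
  by rewrite opnormE; apply: ge_sup => //; exists 0.
by rewrite opnormE; apply: sup_upper_bound => //; split; [exists 0|exists 0].
Qed.

Lemma zero_S2 (hz : forall x : H, x = 0) A : S2 ip A = 0 /\ Yq ip A <= Xq ip A ^+ 2.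
Proof.
rewrite S2_eq Y_eq X_eq /Ss /Ys /Xs !zero_opnorm //.
split; last by rewrite !mulr0 !subr0 !add0r; lra.
have -> : (2 * 0 * 0 - (0 + 0 - 1)) ^+ 2 - (2 * (0 * 0 - 0) - ((0 + 0 - 1) - (0 + 0 - 1))) = (1 : R) ^+ 2 by ring.
by rewrite sqrtr_sqr ger0_norm //; ring.
Qed.

Lemma nn_gt0 y : y <> 0 -> 0 < nn y.
Proof. by move=> hy; rewrite lt_def nn_ge0 andbT; apply/eqP => /nn_eq0. Qed.

Lemma eig_ap T l y : lin T -> T y = sc l y -> y <> 0 -> ap T l.
Proof.
move=> L ey hy e he; have hn := nn_gt0 hy.
exists (sc (Num.sqrt (nn y))^-1 y); split; first exact: nnsc_norm.
by rewrite normalize_nn // ey subrr nn0 mul0r ltW.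
Qed.

Lemma ap_triv E l m : (forall x, E x = sc l x) -> ap E m -> m = l.
Proof.
move=> hl A; apply/eqP; rewrite -subr_eq0; apply/negPn/negP => hne0.
have hsq : 0 < (l - m) ^+ 2 by rewrite lt_def sqr_ge0 andbT sqrf_eq0 subr_eq0 eq_sym -subr_eq0.
have he : 0 < (l - m) ^+ 2 / 2 by rewrite divr_gt0.
have [y [y1 hy]] := A _ he.
have : nn (E y - sc m y) = (l - m) ^+ 2 * nn y by rewrite hl; ripexp; ring.
rewrite y1 mulr1 => e; rewrite e in hy.
lra.
Qed.

Section Final2.
Hypothesis hne : exists x : H, x <> 0.

Lemma triv_iff E : effect ip E ->
  (opnorm ip E + opnorm ip (compl E) = 1 <-> trivial_effect E).
Proof.
move=> hE; have [/andP[u0 u1] _ _ _ _] := SH_bounds (SH_eff hne hE).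
split => [huv|[l [hl hx]]].
  exists (opnorm ip E); split; first by rewrite u0 u1.
  move=> x; apply/eqP; rewrite -subr_eq0; apply/eqP; apply: nn_eq0.
  apply/eqP; rewrite eq_le nn_ge0 andbT.
  have := NL (c := opnorm ip E) (r := 0) (eff_lin hE) (eff_sym hE) (lexx 0) _ x.
  rewrite expr0n mul0r; apply => z.
  have h1 := pos_P1 (eff_pos hE) z; have h2 := pos_P1 (compl_pos hE) z.
  move: h2; rewrite /compl ripBl -/(nn z) => h2.
  have h3 := nn_ge0 z.
  rewrite mul0r normr_le0 subr_eq0; apply/eqP.
  have : opnorm ip (compl E) = 1 - opnorm ip E by lra.
  move=> ev; rewrite ev in h2; nra.
have e1 := ap_triv hx (sig_u hE hne).
have e2 := ap_triv hx (sig_v hE hne).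
lra.
Qed.

Lemma proj_iff E : effect ip E ->
  ([/\ opnorm ip E = 1, opnorm ip (compl E) = 1 & opnorm ip (T1 E) = 0] <-> nontrivial_projection E).
Proof.
move=> hE; have [/andP[u0 u1] /andP[v0 v1] /andP[b0 b1] _ _] := SH_bounds (SH_eff hne hE).
have L := eff_lin hE; have B := eff_bnd hE.
split.
  case=> u1' v1' b0'.
  split.
    move=> x; have := opnorm_bound x (lin_opmul L (lin_compl L)) (bnd_opmul B (bnd_compl B)).
    rewrite -/(T1 E) b0' expr0n mul0r => h.
    have : nn (T1 E x) = 0 by apply/eqP; rewrite eq_le h nn_ge0.
    by move/nn_eq0; rewrite T1E // => /eqP; rewrite subr_eq0 => /eqP.
  split.
    apply: NNPP => hn.
    have hz : forall x, E x = 0 by move=> x; apply: NNPP => hx; apply: hn; exists x.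
    have : opnorm ip E <= 0.
      by apply: opnorm_le => // x; rewrite hz nn0 expr0n mul0r.
    lra.
  apply: NNPP => hn.
  have hz : forall x, compl E x = 0.
    move=> x; apply: NNPP => hx; apply: hn; exists x; move=> ex; apply: hx.
    by rewrite /compl ex subrr.
  have : opnorm ip (compl E) <= 0.
    by apply: opnorm_le => //; [exact: lin_compl|] => x; rewrite hz nn0 expr0n mul0r.
  lra.
case=> hp [[x hx] [x' hx']].
have hb : opnorm ip (T1 E) <= 0.
  apply: opnorm_le => //; first exact: lin_opmul L (lin_compl L).
  by move=> z; rewrite T1E // hp subrr nn0 expr0n mul0r.
have A1 : ap E 1 by apply: (eig_ap (y := E x)) => //; rewrite hp sc1.
have A0 : ap E 0.
  apply: (eig_ap (y := x' - E x')) => //; first by rewrite linB // hp subrr sc0.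
  by move=> e; apply: hx'; apply/eqP; rewrite eq_sym -subr_eq0 e.
have /andP[_ h1] := sig_le hE A1.
have /andP[_ h2] := sig_ge hE A0.
split; lra.
Qed.

End Final2.

Lemma ap_transfer F G C D l : lin F -> lin C -> bnd C -> lin D -> bnd D ->
  (forall x, D (C x) = x) -> (forall x, G x = C (F (D x))) -> ap F l -> ap G l.
Proof.
move=> LF LC BC LD BD hDC hG A e he.
set c := opnorm ip C; set d := opnorm ip D.
have c0 : 0 <= c := opnorm_ge0 LC BC. have d0 : 0 <= d := opnorm_ge0 LD BD.
set Kc := c ^+ 2 + 1; set Kd := d ^+ 2 + 1.
have Kc0 : 0 < Kc by rewrite /Kc; have := sqr_ge0 c; lra.
have Kd0 : 0 < Kd by rewrite /Kd; have := sqr_ge0 d; lra.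
have [y [y1 hy]] := A (e / (Kc * Kd)) (divr_gt0 he (mulr_gt0 Kc0 Kd0)).
have LG : lin G.
  move=> a x z; rewrite !hG (LD a x z) (LF a (D x) (D z)) (LC a (F (D x)) (F (D z))) //.
set z := C y.
have hz : 1 <= Kd * nn z.
  have := opnorm_bound z LD BD; rewrite /z hDC y1 -/d => h.
  have := nn_ge0 (C y); rewrite /Kd; nra.
have nz : 0 < nn z by have := nn_ge0 z; nra.
exists (sc (Num.sqrt (nn z))^-1 z); split; first exact: nnsc_norm.
rewrite normalize_nn //.
have eq : G z - sc l z = C (F y - sc l y) by rewrite hG /z hDC (linB _ _ LC) (linsc _ _ LC).
rewrite eq.
have h1 := opnorm_bound (F y - sc l y) LC BC; rewrite -/c in h1.
have h2 : nn (C (F y - sc l y)) <= Kc * (e / (Kc * Kd)).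
  have := nn_ge0 (F y - sc l y); rewrite /Kc; nra.
have ee : Kc * (e / (Kc * Kd)) = e / Kd by field; apply/andP; split; apply: lt0r_neq0.
rewrite ee in h2.
rewrite ler_pdivrMr // -(ler_pM2l Kd0).
have eq2 : Kd * (e / Kd) = e by rewrite mulrC mulfVK // lt0r_neq0.
have s1 : Kd * nn (C (F y - sc l y)) <= Kd * (e / Kd) by rewrite ler_pM2l.
have s2 : e <= e * (Kd * nn z) by rewrite ler_pMr.
have : Kd * (e * nn z) = e * (Kd * nn z) by ring.
lra.
Qed.

Lemma nn_tri a c x al be : 0 <= al -> 0 <= be ->
  nn a <= al ^+ 2 * nn x -> nn c <= be ^+ 2 * nn x -> nn (a + c) <= (al + be) ^+ 2 * nn x.
Proof.
move=> h1 h2 ha hc; rewrite nnD.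
have hx := nn_ge0 x; have hA := nn_ge0 a; have hC := nn_ge0 c.
have cs := CS a c.
have hr : rip a c <= al * be * nn x.
  have p : 0 <= al * be * nn x by rewrite !mulr_ge0.
  have : rip a c ^+ 2 <= (al * be * nn x) ^+ 2.
    apply: le_trans cs _; rewrite !exprMn.
    have t1 : nn a * nn c <= (al ^+ 2 * nn x) * nn c by apply: ler_wpM2r.
    have t2 : (al ^+ 2 * nn x) * nn c <= (al ^+ 2 * nn x) * (be ^+ 2 * nn x).
      by apply: ler_wpM2l => //; rewrite mulr_ge0 // sqr_ge0.
    have := le_trans t1 t2; move=> t; apply: le_trans t _; rewrite le_eqVlt; apply/orP; left; apply/eqP; ring.
  move=> h; rewrite leNgt; apply/negP => hlt.
  have q1 : 0 < rip a c - al * be * nn x by rewrite subr_gt0.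
  have q2 : 0 < rip a c + al * be * nn x by lra.
  have := mulr_gt0 q1 q2; nra.
nra.
Qed.

Lemma opnorm_diff T U K : lin T -> bnd T -> lin U -> bnd U -> 0 <= K ->
  (forall x, nn (T x - U x) <= K ^+ 2 * nn x) -> `|opnorm ip T - opnorm ip U| <= K.
Proof.
move=> LT BT LU BU hK hd.
have hT := opnorm_ge0 LT BT; have hU := opnorm_ge0 LU BU.
have a1 : opnorm ip T <= opnorm ip U + K.
  apply: opnorm_le => //; first by rewrite addr_ge0.
  move=> x; have -> : T x = U x + (T x - U x) by rewrite addrC subrK.
  by apply: nn_tri => //; apply: opnorm_bound.
have a2 : opnorm ip U <= opnorm ip T + K.
  apply: opnorm_le => //; first by rewrite addr_ge0.
  move=> x; have -> : U x = T x + - (T x - U x) by rewrite opprB addrC subrK.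
  by apply: nn_tri => //; [apply: opnorm_bound|rewrite nnN].
rewrite ler_norml; apply/andP; split; lra.
Qed.

Section Final3.
Hypothesis hne : exists x : H, x <> 0.

Lemma sim_S2 A B : effect ip A -> effect ip B -> (forall l, ap A l <-> ap B l) ->
  S2 ip B = S2 ip A.
Proof.
move=> hA hB hAB.
have eqs : forall E F, effect ip E -> effect ip F -> (forall l, ap E l -> ap F l) ->
  [/\ opnorm ip E <= opnorm ip F, opnorm ip (compl E) <= opnorm ip (compl F),
      opnorm ip (T1 E) <= opnorm ip (T1 F) & opnorm ip (compl (T1 E)) <= opnorm ip (compl (T1 F))].
  move=> E F hE hF hEF; split.
  - by have /andP[_ h] := sig_le hF (hEF _ (sig_u hE hne)).
  - by have /andP[_ h] := sig_ge hF (hEF _ (sig_v hE hne)); move: h; rewrite subKr.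
  - have [lb [Ab ->]] := b_fact1 hE hne; have h := b_fact2 hF (hEF _ Ab); exact h.
  - have [lw [Aw ->]] := w_fact1 hE hne; have h := w_fact2 hF (hEF _ Aw); exact h.
have [a1 a2 a3 a4] := eqs A B hA hB (fun l => proj1 (hAB l)).
have [b1 b2 b3 b4] := eqs B A hB hA (fun l => proj2 (hAB l)).
rewrite !S2_eq.
have -> : opnorm ip B = opnorm ip A by apply/eqP; rewrite eq_le b1 a1.
have -> : opnorm ip (compl B) = opnorm ip (compl A) by apply/eqP; rewrite eq_le b2 a2.
have -> : opnorm ip (T1 B) = opnorm ip (T1 A) by apply/eqP; rewrite eq_le b3 a3.
have -> : opnorm ip (compl (T1 B)) = opnorm ip (compl (T1 A)) by apply/eqP; rewrite eq_le b4 a4.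
by [].
Qed.

End Final3.

Lemma compl_diff T U x : nn (compl T x - compl U x) = nn (T x - U x).
Proof.
rewrite /compl; move: (T x) (U x) => p q; ripexp.
rewrite ?(ripC x p) ?(ripC x q) ?(ripC p q); ring.
Qed.

Lemma lin_sub T U : lin T -> lin U -> lin (opsub T U).
Proof. by move=> LT LU a x y; rewrite /opsub LT LU scalerBr opprD addrACA. Qed.

Lemma bnd_sub T U : bnd T -> bnd U -> bnd (opsub T U).
Proof.
move=> [K hK] [K' hK']; exists (2 * Num.max K 0 + 2 * Num.max K' 0) => x; rewrite /opsub.
apply: le_trans (nnB_le _ _) _.
have := hK x; have := hK' x; have := nn_ge0 x; have : K <= Num.max K 0 by rewrite le_max lexx.
have : K' <= Num.max K' 0 by rewrite le_max lexx.
move: (Num.max K 0) (Num.max K' 0) => M M'; nra.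
Qed.

Lemma sim_main A C D : (exists x : H, x <> 0) -> effect ip A -> invertible_bounded ip C D ->
  effect ip (opmul C (opmul A D)) -> S2 ip (opmul C (opmul A D)) = S2 ip A.
Proof.
move=> hne hA [bC bD hCD hDC] hB.
have [LC BC] := bnd_of bC; have [LD BD] := bnd_of bD.
apply: sim_S2 => // l; split.
  apply: (ap_transfer (C := C) (D := D)) => //; exact: eff_lin hA.
apply: (ap_transfer (C := D) (D := C)) => //; first exact: eff_lin hB.
by move=> x; rewrite /opmul !hDC.
Qed.

Section Final4.
Hypothesis hne : exists x : H, x <> 0.

Lemma T1_diff A B d : effect ip A -> effect ip B -> 0 <= d ->
  (forall x, nn (B x - A x) <= d ^+ 2 * nn x) ->
  forall x, nn (T1 B x - T1 A x) <= (d + d) ^+ 2 * nn x.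
Proof.
move=> hA hB hd hx x.
have [/andP[uA0 uA1] /andP[vA0 vA1] _ _ _] := SH_bounds (SH_eff hne hA).
have [/andP[uB0 uB1] /andP[vB0 vB1] _ _ _] := SH_bounds (SH_eff hne hB).
have LA := eff_lin hA; have LB := eff_lin hB.
have -> : T1 B x - T1 A x = B ((x - B x) - (x - A x)) + (B (x - A x) - A (x - A x)).
  by rewrite /T1 /opmul /compl (linB (x - B x) (x - A x) LB) addrA subrK.
have hn := nn_ge0 x.
apply: nn_tri => //.
  have h1 := opnorm_bound ((x - B x) - (x - A x)) LB (eff_bnd hB).
  have e1 : nn ((x - B x) - (x - A x)) = nn (B x - A x) by have := compl_diff B A x.
  rewrite e1 in h1; have h2 := hx x; have h3 := nn_ge0 (B x - A x).
  have h4 : opnorm ip B ^+ 2 <= 1 by nra.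
  have h5 : opnorm ip B ^+ 2 * nn (B x - A x) <= nn (B x - A x) by nra.
  lra.
have h1 := hx (x - A x).
have h2 := opnorm_bound x (lin_compl LA) (bnd_compl (eff_bnd hA)).
rewrite /compl in h2.
have h3 : opnorm ip (compl A) ^+ 2 <= 1 by nra.
have h4 := nn_ge0 (x - A x).
have h5 : nn (x - A x) <= nn x by nra.
have h6 : d ^+ 2 * nn (x - A x) <= d ^+ 2 * nn x by apply: ler_wpM2l => //; exact: sqr_ge0.
lra.
Qed.

Lemma cont_main A : effect ip A -> forall e : R, 0 < e -> exists2 dl : R, 0 < dl &
  forall B, effect ip B -> opnorm ip (opsub B A) < dl -> `|S2 ip B - S2 ip A| < e.
Proof.
move=> hA e he.
have [eta0 etaE] := eta_ok he.
set eta := Num.min (e / 13) (e ^+ 2 / 81) in eta0 etaE.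
exists (eta / 2); first by rewrite divr_gt0.
move=> B hB hd.
have LA := eff_lin hA; have LB := eff_lin hB.
have BA := eff_bnd hA; have BB := eff_bnd hB.
set d := opnorm ip (opsub B A) in hd.
have d0 : 0 <= d := opnorm_ge0 (lin_sub LB LA) (bnd_sub BB BA).
have hx : forall x, nn (B x - A x) <= d ^+ 2 * nn x.
  by move=> x; have := opnorm_bound x (lin_sub LB LA) (bnd_sub BB BA).
have du : `|opnorm ip B - opnorm ip A| <= eta.
  apply: le_trans (opnorm_diff LB BB LA BA d0 hx) _; lra.
have dv : `|opnorm ip (compl B) - opnorm ip (compl A)| <= eta.
  apply: le_trans (opnorm_diff (lin_compl LB) (bnd_compl BB) (lin_compl LA) (bnd_compl BA) d0 _) _.
    by move=> x; rewrite compl_diff.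
  lra.
have L1A := lin_opmul LA (lin_compl LA); have L1B := lin_opmul LB (lin_compl LB).
have B1A := bnd_opmul BA (bnd_compl BA); have B1B := bnd_opmul BB (bnd_compl BB).
have dd0 : 0 <= d + d by rewrite addr_ge0.
have h1 := T1_diff hA hB d0 hx.
have db : `|opnorm ip (T1 B) - opnorm ip (T1 A)| <= eta.
  apply: le_trans (opnorm_diff L1B B1B L1A B1A dd0 h1) _; lra.
have dw : `|opnorm ip (compl (T1 B)) - opnorm ip (compl (T1 A))| <= eta.
  apply: le_trans (opnorm_diff (lin_compl L1B) (bnd_compl B1B) (lin_compl L1A) (bnd_compl B1A) dd0 _) _.
    by move=> x; rewrite compl_diff; apply: h1.
  lra.
rewrite !S2_eq.
have := SH_cont (SH_eff hne hB) (SH_eff hne hA) (ltW eta0) du dv db dw.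
lra.
Qed.

End Final4.

Lemma compl_S2 A : lin A -> S2 ip (compl A) = S2 ip A.
Proof.
move=> L.
have cc : compl (compl A) = A by apply: functional_extensionality => x; rewrite /compl subKr.
have om : opmul (compl A) A = opmul A (compl A).
  by apply: functional_extensionality => x; rewrite /opmul /compl (linB _ _ L).
rewrite !S2_eq /T1 cc om.
have eX : Xs (opnorm ip (compl A)) (opnorm ip A) = Xs (opnorm ip A) (opnorm ip (compl A)).
  by rewrite /Xs; ring.
have eY : forall b w, Ys (opnorm ip (compl A)) (opnorm ip A) b w = Ys (opnorm ip A) (opnorm ip (compl A)) b w.
  by move=> b w; rewrite /Ys; ring.
by rewrite /Ss eX eY.
Qed.

End Basics.

Theorem mainTheorem11 (R : realType) (H : lmodType R[i]) (ip : H -> H -> R[i])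
  (hH : separable_hilbert ip) :
  (forall A : H -> H, effect ip A -> Yq ip A <= Xq ip A ^+ 2) /\
  sharpness_measure ip (S2 ip).
Proof.
have hip : inner_product ip by case: hH.
case: (classic (exists x : H, x <> 0)) => [hne|hz'].
  split.
    move=> A hA; have := SH_D (SH_eff hip hne hA).
    by rewrite /Ds -Y_eq -X_eq subr_ge0.
  split.
  - by move=> A hA; rewrite S2_eq; apply: SH_range (SH_eff hip hne hA).
  - move=> A hA; rewrite S2_eq.
    exact: iff_trans (SH_zero (SH_eff hip hne hA)) (triv_iff hip hne hA).
  - move=> A hA; rewrite S2_eq.
    exact: iff_trans (SH_one (SH_eff hip hne hA)) (proj_iff hip hne hA).
  - move=> A hA; have h := compl_S2 ip (eff_lin hip hA); exact h.
  split.
    move=> A C D hA hCD hB; have h := sim_main hip hne hA hCD hB; exact h.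
  move=> A hA; have h := cont_main hip hne hA; exact h.
have hz : forall x : H, x = 0 by move=> x; apply: NNPP => hx; apply: hz'; exists x.
have Z := zero_S2 hip hz.
split; first by move=> A _; case: (Z A).
split.
- by move=> A _; rewrite (proj1 (Z A)) lexx ler01.
- move=> A _; rewrite (proj1 (Z A)); split => // _.
  by exists 0; rewrite lexx ler01; split => // x; rewrite (hz (A x)) (hz x) scaler0.
- move=> A _; rewrite (proj1 (Z A)); split.
    by move=> h; exfalso; have := @oner_neq0 R; rewrite -h eqxx.
  by case=> _ [[x hx] _]; exfalso; apply: hx; apply: hz.
- by move=> A _; rewrite !(proj1 (Z _)).
split.
  by move=> A C D _ _ _; rewrite !(proj1 (Z _)).
move=> A _ e he; exists 1 => // B _ _; rewrite !(proj1 (Z _)) subrr normr0 //.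
Qed.
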